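(* Let $m\ge 2$, $n\ge 1$, and let $\mathcal{A}\in\mathbb{S}_{m,n}$ be a tensor with all entries nonnegative. Suppose $\mathcal{A}=\mathcal{B}+\mathcal{C}$ with $\mathcal{B}=\sum_{k=1}^{r_1}(u^{(k)})^m$ and $\mathcal{C}=\sum_{j=1}^{r_2}(v^{(j)})^m$, where $u^{(k)}\in\mathbb{R}^n$ for all $k\in[r_1]$ and $v^{(j)}\in\mathbb{R}^n_+$ for all $j\in[r_2]$. If there exists an index $i_0\in[n]$ such that $u^{(k)}_{i_0}>0$ for all $k\in[r_1]$, then $\mathcal{A}$ is doubly nonnegative.
   Context: $[n]=\{1,\dots,n\}$. $\mathbb{T}_{m,n}$ is the space of real $m$th order $n$-dimensional tensors $\mathcal{A}=(a_{i_1\ldots i_m})$, $i_j\in[n]$, and $\mathbb{S}_{m,n}$ is the subspace of symmetric tensors (entries invariant under all permutations of the indices). For $x\in\mathbb{R}^n$, $x^m\in\mathbb{S}_{m,n}$ is the tensor with entries $(x^m)_{i_1\ldots i_m}=x_{i_1}\cdots x_{i_m}$. For $\mathcal{A}\in\mathbb{T}_{m,n}$, $\mathcal{A}x^{m-1}\in\mathbb{R}^n$ has entries $(\mathcal{A}x^{m-1})_i=\sum_{i_2,\dots,i_m\in[n]}a_{ii_2\ldots i_m}x_{i_2}\cdots x_{i_m}$, and $x^{[m-1]}\in\mathbb{R}^n$ has entries $x_i^{m-1}$. A real number $\lambda$ is an H-eigenvalue of $\mathcal{A}\in\mathbb{S}_{m,n}$ if there is $x\in\mathbb{R}^n\setminus\{0\}$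 with $\mathcal{A}x^{m-1}=\lambda x^{[m-1]}$. A tensor $\mathcal{A}\in\mathbb{S}_{m,n}$ is doubly nonnegative if all its entries are nonnegative and all its H-eigenvalues are nonnegative. *)

(* Defs.v *)
From HB Require Import structures.
From mathcomp Require Import all_boot all_order all_algebra all_fingroup.
Set Implicit Arguments. Unset Strict Implicit. Unset Printing Implicit Defensive.
Import Order.TTheory GRing.Theory Num.Theory.
Local Open Scope ring_scope.

(* Multi-indices (i_1,...,i_m) with i_j in [n], encoded as functions 'I_m -> 'I_n
   (position j of the index is f j; position 0 plays the role of i_1). *)
Definition tidx (m n : nat) := {ffun 'I_m -> 'I_n}.

Definition tensor (R : Type) (m n : nat) := tidx m n -> R.

Definition symmetric_tensor (R : Type) (m n : nat) (A : tensor R m n) : Prop :=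
  forall (s : 'S_m) (f : tidx m n), A [ffun j => f (s j)] = A f.

Definition tpow (R : realFieldType) (m n : nat) (x : 'I_n -> R) : tensor R m n :=
  fun f => \prod_(j < m) x (f j).

Definition tapply (R : realFieldType) (m n : nat) (A : tensor R m n)
    (x : 'I_n -> R) (i : 'I_n) : R :=
  \sum_(f : tidx m n | [forall j : 'I_m, (val j == 0)%N ==> (f j == i)])
     A f * \prod_(j : 'I_m | val j != 0%N) x (f j).

Definition H_eigenvalue (R : realFieldType) (m n : nat) (A : tensor R m n)
    (lambda : R) : Prop :=
  exists x : 'I_n -> R, (exists i, x i != 0) /\
    forall i, tapply A x i = lambda * x i ^+ (m - 1).

Definition doubly_nonnegative (R : realFieldType) (m n : nat) (A : tensor R m n) : Prop :=
  [/\ symmetric_tensor A,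
      forall f, 0 <= A f
    & forall lambda, H_eigenvalue A lambda -> 0 <= lambda].

(* Main.v *)
Require Import Defs.
From HB Require Import structures.
From mathcomp Require Import all_boot all_order all_algebra all_fingroup.
Import Order.TTheory GRing.Theory Num.Theory.
Local Open Scope ring_scope.

Lemma key (R : rcfType) (m n : nat) (hm : (1 <= m)%N) (w x : 'I_n -> R) (i : 'I_n) :
  \sum_(f : tidx m n | [forall j : 'I_m, (val j == 0)%N ==> (f j == i)])
     @tpow R m n w f * \prod_(j : 'I_m | val j != 0%N) x (f j)
  = w i * (\sum_l w l * x l) ^+ (m - 1).
Proof.
case: m hm => // m _.
pose Q := fun (j : 'I_m.+1) (l : 'I_n) => (val j == 0)%N ==> (l == i).
pose G := fun (j : 'I_m.+1) (l : 'I_n) => w l * (if val j != 0%N then x l else 1).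
rewrite (eq_bigr (fun f : tidx m.+1 n => \prod_j G j (f j))); last first.
  move=> f _; rewrite /tpow [X in _ * X]big_mkcond -big_split /=.
  by apply: eq_bigr => j _; rewrite /G; case: ifP.
rewrite (eq_bigl (fun f : tidx m.+1 n => f \in family Q)); last first.
  by move=> f; apply/forallP/familyP => H j; have := H j.
rewrite -(bigA_distr_big_dep Q G).
rewrite big_ord_recl /= subn1 /=.
congr (_ * _).
  rewrite (big_pred1 i) /G /= ?mulr1 //.
rewrite -[in RHS](card_ord m) -prodr_const; apply: eq_bigr => j _.
apply: eq_big => l; first by rewrite /Q.
by move=> _; rewrite /G.
Qed.

Theorem mainTheorem1 (R : rcfType) (m n r1 r2 : nat) (hm : (2 <= m)%N) (hn : (1 <= n)%N)
    (A : tensor R m n) (u : 'I_r1 -> 'I_n -> R) (v : 'I_r2 -> 'I_n -> R) :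
  symmetric_tensor A ->
  (forall f, 0 <= A f) ->
  (forall f, A f = \sum_(k < r1) @tpow R m n (u k) f + \sum_(j < r2) @tpow R m n (v j) f) ->
  (forall j i, 0 <= v j i) ->
  (exists i0 : 'I_n, forall k, 0 < u k i0) ->
  doubly_nonnegative A.
Proof.
move=> hsym hnn hA hv [i0 hu]; split => // lam [x [[i1 hx1] heig]].
have hm1 : (1 <= m)%N by apply: ltnW.
set s := fun k => \sum_l u k l * x l.
set t := fun j => \sum_l v j l * x l.
have tap i : tapply A x i =
   \sum_k u k i * s k ^+ (m - 1) + \sum_j v j i * t j ^+ (m - 1).
  rewrite /tapply.
  under eq_bigr => f _ do rewrite hA mulrDl !mulr_suml.
  rewrite big_split /=; congr (_ + _); rewrite exchange_big /=;
    by apply: eq_bigr => k _; rewrite key.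
have em : (m - 1).+1 = m by rewrite subn1 prednK // ltnW.
have aux (r : nat) (a : 'I_n -> R) (c : R) :
    \sum_i x i * (a i * c) = (\sum_i a i * x i) * c.
  by rewrite mulr_suml; apply: eq_bigr => i _; rewrite mulrA (mulrC (x i)).
have Hs : 0 < \sum_i x i ^+ (m - 1).+1 -> ~~ odd (m - 1).+1 -> 0 <= lam.
  move=> Spos hev.
  have e1 : \sum_i x i * tapply A x i = lam * \sum_i x i ^+ (m-1).+1.
    rewrite mulr_sumr; apply: eq_bigr => i _; by rewrite heig exprS mulrCA.
  have e2 : \sum_i x i * tapply A x i =
      \sum_k s k ^+ (m-1).+1 + \sum_j t j ^+ (m-1).+1.
    under eq_bigr => i _ do rewrite tap mulrDr !mulr_sumr.
    rewrite big_split /=; congr (_+_); rewrite exchange_big /=;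
      by apply: eq_bigr => k _; rewrite (aux 0%N) exprS.
  rewrite -(pmulr_lge0 _ Spos) -e1 e2.
  by apply: addr_ge0; apply: sumr_ge0 => k _; apply: exprn_even_ge0.
have hm0 : (m - 1 != 0)%N by rewrite -lt0n subn_gt0.
have xpos i : x i != 0 -> ~~ odd (m - 1) -> 0 < x i ^+ (m - 1).
  by move=> xi he; rewrite exprn_even_gt0 // xi orbT.
case: (boolP (odd m)) => hodd.
- have hev : ~~ odd (m - 1) by move: hodd; rewrite -{1}em /=.
  have t0 : 0 <= \sum_j v j i0 * t j ^+ (m - 1).
    by apply: sumr_ge0 => j _; apply: mulr_ge0 => //; apply: exprn_even_ge0.
  have s0 : 0 <= \sum_k u k i0 * s k ^+ (m - 1).
    by apply: sumr_ge0 => k _; apply: mulr_ge0; [apply: ltW | apply: exprn_even_ge0].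
  case: (boolP (x i0 == 0)) => hx0.
  + have z : tapply A x i0 = 0 by rewrite heig (eqP hx0) expr0n (negbTE hm0) mulr0.
    move: z; rewrite tap => /eqP; rewrite paddr_eq0 // => /andP [/eqP sz _].
    have sk k : s k ^+ (m - 1) = 0.
      have nn : forall k' : 'I_r1, predT k' -> 0 <= u k' i0 * s k' ^+ (m - 1).
        by move=> k' _; apply: mulr_ge0; [apply: ltW | apply: exprn_even_ge0].
      have := @psumr_eq0P _ _ _ _ nn sz k isT.
      by move=> /eqP; rewrite mulf_eq0 (negbTE (lt0r_neq0 (hu k))) /= => /eqP.
    rewrite -(pmulr_lge0 _ (xpos _ hx1 hev)) -heig tap.
    rewrite big1 ?add0r; last by move=> k _; rewrite sk mulr0.
    by apply: sumr_ge0 => j _; apply: mulr_ge0 => //; apply: exprn_even_ge0.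
  + rewrite -(pmulr_lge0 _ (xpos _ hx0 hev)) -heig tap.
    exact: addr_ge0.
- apply: Hs; last by rewrite em.
  have hev : ~~ odd (m - 1).+1 by rewrite em.
  rewrite (bigD1 i1) //=; apply: (@lt_le_trans _ _ (x i1 ^+ (m - 1).+1)).
    by rewrite exprn_even_gt0 // hx1 orbT.
  by rewrite lerDl; apply: sumr_ge0 => i _; apply: exprn_even_ge0.
Qed.
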